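(* Let $X$ be a compact metric space, $f\colon X\to X$ continuous, and $\bar x=(x_i)_{i\in\mathbb Z}$ a full orbit. Then $1\in\mathrm{Per}(\bar x)$, and $\mathrm{Per}(\bar x)$ is closed under taking (positive) divisors and least common multiples: if $k\in\mathrm{Per}(\bar x)$ and $d\mid k$ then $d\in\mathrm{Per}(\bar x)$, and if $m,n\in\mathrm{Per}(\bar x)$ then $\operatorname{lcm}(m,n)\in\mathrm{Per}(\bar x)$.
   Context: A full orbit is a sequence $\bar x=(x_i)_{i\in\mathbb Z}$ in $X$ with $f(x_i)=x_{i+1}$ for all $i$. $2^X$ is the space of nonempty closed subsets of $X$ with the Hausdorff metric, $2^f(C)=f(C)$. $\mathrm{Per}(\bar x)$ is the set of $k\in\mathbb N$ such that $\overline{\{x_{mk}:m\in\mathbb Z\}}$ is a periodic point of $2^f$ with fundamental period $k$. *)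

(* Defs.v *)
From HB Require Import structures.
From mathcomp Require Import all_boot all_order all_algebra.
From mathcomp Require Import all_classical all_reals all_analysis.
Set Implicit Arguments. Unset Strict Implicit. Unset Printing Implicit Defensive.
Import Order.TTheory GRing.Theory Num.Theory.
Local Open Scope classical_set_scope.
Local Open Scope ring_scope.

Definition full_orbit {X : Type} (f : X -> X) (x : int -> X) : Prop :=
  forall i : int, f (x i) = x (i + 1).

Definition hyper_map {X : Type} (f : X -> X) : set X -> set X :=
  fun C => f @` C.

Definition periodic_fund {T : Type} (g : T -> T) (a : T) (k : nat) : Prop :=
  (0 < k)%N /\ iter k g a = a /\
  (forall j : nat, (0 < j)%N -> (j < k)%N -> iter j g a <> a).

Definition sub_orbit_closure {X : topologicalType} (x : int -> X) (k : nat)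
  : set X := closure [set x (m * k%:Z) | m in [set: int]].

Definition Per {X : topologicalType} (f : X -> X) (x : int -> X) (k : nat)
  : Prop := periodic_fund (hyper_map f) (sub_orbit_closure x k) k.

(* Main.v *)
Require Import Defs.
From HB Require Import structures.
From mathcomp Require Import all_boot all_order all_algebra.
From mathcomp Require Import all_classical all_reals all_analysis.
From mathcomp Require Import ring lra zify.
Import Order.TTheory GRing.Theory Num.Theory.
Local Open Scope classical_set_scope.
Local Open Scope ring_scope.

Lemma closure_min (T : topologicalType) (A B : set T) :
  closed B -> A `<=` B -> closure A `<=` B.
Proof. by move=> /closure_id cB AB; rewrite cB; apply: closureS. Qed.

Lemma image_closureE (R : realType) (X : metricType R) (f : X -> X) (A : set X) :
  compact [set: X] -> continuous f -> f @` closure A = closure (f @` A).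
Proof.
move=> cX cf; apply/seteqP; split.
  have : closure A `<=` f @^-1` closure (f @` A).
    apply: closure_min; first by apply: preimage_closed; [by move=> ? _; apply: cf | exact: closed_closure].
    by move=> a Aa; apply: subset_closure; exists a.
  by move=> H _ [a /H ? <-].
apply: closure_min; last by apply: image_subset; exact: subset_closure.
apply: compact_closed; first exact: metric_hausdorff.
apply: continuous_compact; first exact: continuous_subspaceT.
apply: (subclosed_compact _ cX) => //; exact: closed_closure.
Qed.

Definition Cs {X : topologicalType} (x : int -> X) (k s : int) : set X :=
  closure [set x (m * k + s) | m in [set: int]].

Lemma subE {X : topologicalType} (x : int -> X) (k : nat) :
  sub_orbit_closure x k = Cs x k%:Z 0.
Proof.
rewrite /sub_orbit_closure /Cs; congr closure.
by apply/seteqP; split => _ [m _ <-]; exists m => //; rewrite addr0.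
Qed.

Lemma Cs_per {X : topologicalType} (x : int -> X) (k s c : int) :
  Cs x k (s + c * k) = Cs x k s.
Proof.
rewrite /Cs; congr closure.
apply/seteqP; split => _ [m _ <-].
  by exists (m + c) => //; congr x; ring.
by exists (m - c) => //; congr x; ring.
Qed.

Lemma Cs_img (R : realType) (X : metricType R) (f : X -> X) (x : int -> X) (k s : int) :
  compact [set: X] -> continuous f -> full_orbit f x ->
  hyper_map f (Cs x k s) = Cs x k (s + 1).
Proof.
move=> cX cf fo; rewrite /hyper_map /Cs image_closureE //; congr closure.
apply/seteqP; split => y.
  by move=> [_ [m _ <-] <-]; exists m => //; rewrite fo addrA.
move=> [m _ <-]; exists (x (m * k + s)); [by exists m | by rewrite fo addrA].
Qed.

Lemma Cs_iter (R : realType) (X : metricType R) (f : X -> X) (x : int -> X) (k s : int) (n : nat) :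
  compact [set: X] -> continuous f -> full_orbit f x ->
  iter n (hyper_map f) (Cs x k s) = Cs x k (s + n%:Z).
Proof.
move=> cX cf fo; elim: n => [|n IH]; first by rewrite addr0.
by rewrite iterS IH (@Cs_img R X f x k _ cX cf fo) -addn1 PoszD addrA.
Qed.

Lemma iter_sub {X : Type} (f : X -> X) (A B : set X) (n : nat) :
  A `<=` B -> iter n (hyper_map f) A `<=` iter n (hyper_map f) B.
Proof.
move=> AB; elim: n => [|n IH] //=; rewrite /hyper_map; exact: image_subset.
Qed.

Lemma iter_mem {X : Type} (f : X -> X) (A : set X) (y : X) (n : nat) :
  A y -> iter n (hyper_map f) A (iter n f y).
Proof. by move=> Ay; elim: n => [|n IH] //=; exists (iter n f y). Qed.

Lemma orbit_iter {X : Type} (f : X -> X) (x : int -> X) (i : int) (n : nat) :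
  full_orbit f x -> x (i + n%:Z) = iter n f (x i).
Proof.
move=> fo; elim: n => [|n IH]; first by rewrite addr0.
by rewrite iterS -IH fo -addn1 PoszD addrA.
Qed.

Lemma Cs_shift_sub (R : realType) (X : metricType R) (f : X -> X) (x : int -> X) (k u u' s : int) :
  compact [set: X] -> continuous f -> full_orbit f x -> 0 < k ->
  Cs x k u `<=` Cs x k u' -> Cs x k (u + s) `<=` Cs x k (u' + s).
Proof.
move=> cX cf fo k0 H.
have hp : 0 <= s + `|s| * k.
  have : `|s| <= `|s| * k by rewrite ler_peMr // ?normr_ge0; lia.
  have := ler_norm (- s); rewrite normrN; lra.
have -> : s = (absz (s + `|s| * k))%:Z + (- `|s|) * k.
  by rewrite gez0_abs //; ring.
rewrite !addrA !Cs_per -!(@Cs_iter R X f x k _ _ cX cf fo).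
exact: iter_sub.
Qed.

Lemma Cs_sym (R : realType) (X : metricType R) (f : X -> X) (x : int -> X) (k : nat) (t : int) :
  compact [set: X] -> continuous f -> full_orbit f x -> (0 < k)%N ->
  Cs x k 0 `<=` Cs x k t -> Cs x k 0 = Cs x k t.
Proof.
move=> cX cf fo k0 H.
have kz : 0 < k%:Z by rewrite ltz_nat.
have step : forall i : nat, Cs x k t `<=` Cs x k (t * (i.+1)%:Z).
  elim=> [|i IH]; first by rewrite mulr1.
  apply: (subset_trans IH).
  have := @Cs_shift_sub R X f x k 0 t (t * i.+1%:Z) cX cf fo kz H.
  by rewrite add0r -(addn1 i.+1) PoszD mulrDr mulr1 addrC.
apply/seteqP; split => //.
have := step k.-1; rewrite prednK //.
by rewrite -[t * _]add0r Cs_per.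
Qed.

Lemma per_dvd (R : realType) (X : metricType R) (f : X -> X) (x : int -> X) (k t : nat) :
  compact [set: X] -> continuous f -> full_orbit f x ->
  Per f x k -> Cs x k t%:Z = Cs x k 0 -> (k %| t)%N.
Proof.
move=> cX cf fo [k0 [_ Hk]] E.
have E' : Cs x k (t %% k)%N%:Z = Cs x k 0.
  rewrite -E {2}(divn_eq t k) PoszD addrC PoszM Cs_per //.
rewrite /dvdn; apply/negPn/negP => nz.
apply: (Hk (t %% k)%N); first by rewrite lt0n.
  by rewrite ltn_pmod.
by rewrite subE (@Cs_iter R X f x k _ _ cX cf fo) add0r E'.
Qed.

Lemma up_le (P : int -> Prop) (a b : int) :
  (forall a, P a -> P (a + 1)) -> a <= b -> P a -> P b.
Proof.
move=> up ab Pa.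
have -> : b = a + (absz (b - a))%:Z by rewrite gez0_abs ?subr_ge0 //; ring.
elim: (absz (b - a)) => [|n IH]; first by rewrite addr0.
by rewrite -addn1 PoszD addrA; apply: up.
Qed.

Lemma pigeon (q : nat) (P : nat -> int -> Prop) :
  (forall r a, P r a -> P r (a + 1)) ->
  forall N : int, (forall a, a <= N -> exists2 r, (r < q)%N & P r a) ->
  exists2 r, (r < q)%N & (forall a, P r a).
Proof.
move=> up; elim: q => [|q IH] N H.
  by have [r] := H N (lexx N).
have [Hall|] := pselect (forall a, a <= N -> P q a).
  exists q => // a; have [aN|Na] := lerP a N; first exact: Hall.
  by apply: (@up_le (P q) _ _ (up q) (ltW Na)); apply: Hall.
move=> /existsNP [a0 /not_implyP [a0N na0]].
have [r rq Pr] : exists2 r, (r < q)%N & (forall a, P r a).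
  apply: (IH a0) => a aa0.
  have [r rq Pra] := H a (le_trans aa0 a0N).
  exists r => //; rewrite ltnS leq_eqVlt in rq.
  case/orP: rq => [/eqP rq|//]; subst r.
  by exfalso; apply: na0; apply: (@up_le (P q) _ _ (up q) aa0).
by exists r => //; apply: ltnW.
Qed.

Lemma Per_intro (R : realType) (X : metricType R) (f : X -> X) (x : int -> X) (k : nat) :
  compact [set: X] -> continuous f -> full_orbit f x -> (0 < k)%N ->
  (forall j : nat, (0 < j)%N -> (j < k)%N -> Cs x k j%:Z <> Cs x k 0) -> Per f x k.
Proof.
move=> cX cf fo k0 H; split => //; split.
  rewrite subE (@Cs_iter R X f x k _ _ cX cf fo) add0r.
  by have := Cs_per x k 0 1; rewrite mul1r add0r.
move=> j j0 jk; rewrite subE (@Cs_iter R X f x k _ _ cX cf fo) add0r.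
exact: H.
Qed.

Theorem proposition4p7 (R : realType) (X : metricType R) (f : X -> X)
    (x : int -> X) :
  compact [set: X] -> continuous f -> full_orbit f x ->
  Per f x 1 /\
  (forall k d : nat, Per f x k -> (0 < d)%N -> (d %| k)%N -> Per f x d) /\
  (forall m n : nat, Per f x m -> Per f x n -> Per f x (lcmn m n)).
Proof.
move=> cX cf fo; split; last split.
- by apply: (@Per_intro R X f x _ cX cf fo) => // -[|j].
- move=> k d Pk d0 dk; apply: (@Per_intro R X f x _ cX cf fo) => // j j0 jd E.
  have k0 : (0 < k)%N by case: Pk.
  set q := (k %/ d)%N.
  have hk : k%:Z = q%:Z * d%:Z by rewrite -PoszM divnK.
  have q0 : (0 < q)%N by rewrite divn_gt0 // dvdn_leq.
  have cover : forall a : int, exists2 r, (r < q)%N & Cs x k (r * d + j)%N%:Z (x (a * k%:Z)).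
    move=> a.
    have xin : Cs x d j (x (a * k%:Z)).
      rewrite E; apply: subset_closure; exists (a * q%:Z) => //.
      by rewrite addr0 hk mulrA.
    have : Cs x d j `<=` \bigcup_(r in `I_q) Cs x k (r * d + j)%N%:Z.
      apply: closure_min.
        by apply: closed_bigcup; [exact: finite_II | move=> r _; exact: closed_closure].
      move=> _ [b _ <-].
      have qz : (q%:Z != 0) by rewrite eqz_nat -lt0n.
      have qz0 : 0 < q%:Z by rewrite ltz_nat.
      have rE : (absz (b %% q%:Z)%Z)%:Z = (b %% q%:Z)%Z by rewrite gez0_abs // modz_ge0.
      exists (absz (b %% q%:Z)%Z).
        by rewrite /= -ltz_nat rE ltz_pmod.
      apply: subset_closure; exists (b %/ q%:Z)%Z => //.
      rewrite PoszD PoszM rE hk {3}(divz_eq b q%:Z); congr x; ring.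
    by move=> /(_ _ xin) [r rq Hr]; exists r.
  have up : forall r a, Cs x k (r * d + j)%N%:Z (x (a * k%:Z)) ->
      Cs x k (r * d + j)%N%:Z (x ((a + 1) * k%:Z)).
    move=> r a; set t := ((r * d + j)%N)%:Z => H.
    rewrite mulrDl mul1r (@orbit_iter X f x _ k fo).
    have := @iter_mem X f _ _ k H.
    rewrite (@Cs_iter R X f x k _ _ cX cf fo).
    by have := Cs_per x k t 1; rewrite mul1r => ->.
  have [r rq Hall] := @pigeon q (fun r a => Cs x k (r * d + j)%N%:Z (x (a * k%:Z)))
     up 0 (fun a _ => cover a).
  have sub0 : Cs x k 0 `<=` Cs x k (r * d + j)%N%:Z.
    apply: closure_min; first exact: closed_closure.
    by move=> _ [a _ <-]; rewrite addr0; apply: Hall.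
  have := @Cs_sym R X f x k _ cX cf fo k0 sub0 => /esym /(@per_dvd R X f x k _ cX cf fo Pk) kd.
  have : (d %| r * d + j)%N by apply: dvdn_trans kd.
  rewrite dvdn_addr ?dvdn_mull // => /(dvdn_leq j0).
  by rewrite leqNgt jd.
- move=> m n Pm Pn.
  have m0 : (0 < m)%N by case: Pm.
  have n0 : (0 < n)%N by case: Pn.
  have L0 : (0 < lcmn m n)%N by rewrite lcmn_gt0 m0.
  apply: (@Per_intro R X f x _ cX cf fo) => // j j0 jL E.
  have key : forall p, Per f x p -> (p %| lcmn m n)%N -> (p %| j)%N.
    move=> p Pp pL; have p0 : (0 < p)%N by case: Pp.
    apply: (@per_dvd R X f x p _ cX cf fo Pp); apply: esym; apply: (@Cs_sym R X f x p _ cX cf fo p0).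
    apply: closure_min; first exact: closed_closure.
    move=> _ [a _ <-]; rewrite addr0.
    have h1 : Cs x (lcmn m n) (0 + a * p%:Z) (x (a * p%:Z)).
      by apply: subset_closure; exists 0 => //; rewrite mul0r !add0r.
    have h2 := @Cs_shift_sub R X f x (lcmn m n) 0 j (a * p%:Z) cX cf fo
      (ltac:(by rewrite ltz_nat)) (ltac:(by rewrite E)).
    apply: (closureS _ (h2 _ h1)) => _ [c _ <-].
    have hL : (lcmn m n)%:Z = ((lcmn m n) %/ p)%N%:Z * p%:Z by rewrite -PoszM divnK.
    exists (c * ((lcmn m n) %/ p)%N%:Z + a) => //; rewrite hL; congr x; ring.
  have : (lcmn m n %| j)%N by rewrite dvdn_lcm !key // ?dvdn_lcml ?dvdn_lcmr.
  by move/(dvdn_leq j0); rewrite leqNgt jL.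
Qed.
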